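(* Let $X$ be a topological space, let $Y$ be a functionally closed subset of $X$, let $(g,h)$ be a countable pair of Hahn on $X$, and let $f_0:X\to\overline{\mathbb R}$ be a continuous function such that $g(y)\le f_0(y)\le h(y)$ for all $y\in Y$. Then there exists a continuous function $f:X\to\overline{\mathbb R}$ such that $f(y)=f_0(y)$ for all $y\in Y$ and $g(x)\le f(x)\le h(x)$ for all $x\in X$.
   Context: $\overline{\mathbb R}=[-\infty,+\infty]$ with the order topology. A set $A\subseteq X$ is functionally closed if $A=\alpha^{-1}(0)$ for some continuous $\alpha:X\to[0,1]$. A pair $(g,h)$ of functions $g,h:X\to\overline{\mathbb R}$ is a countable pair of Hahn if there are continuous functions $g_n,h_n:X\to\overline{\mathbb R}$ ($n\in\mathbb N$) such that $g(x)=\inf_{n\in\mathbb N}g_n(x)\le\sup_{n\in\mathbb N}h_n(x)=h(x)$ for every $x\in X$. *)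

(* Defs.v *)
From HB Require Import structures.
From mathcomp Require Import all_boot all_order all_algebra.
From mathcomp Require Import all_classical all_reals all_analysis.
Set Implicit Arguments. Unset Strict Implicit. Unset Printing Implicit Defensive.
Import Order.TTheory GRing.Theory Num.Theory.
Import numFieldNormedType.Exports.
Local Open Scope classical_set_scope.
Local Open Scope ring_scope.

Definition functionally_closed (R : realType) (X : topologicalType) (A : set X) : Prop :=
  exists alpha : X -> R, continuous alpha /\ (forall x, 0 <= alpha x <= 1) /\
    A = alpha @^-1` [set 0].

Definition countable_Hahn_pair (R : realType) (X : topologicalType)
    (g h : X -> \bar R) : Prop :=
  exists (gn hn : nat -> X -> \bar R),
    (forall n, continuous (gn n)) /\ (forall n, continuous (hn n)) /\
    forall x, [/\ g x = ereal_inf (range (fun n => gn n x)),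
                 h x = ereal_sup (range (fun n => hn n x)) & (g x <= h x)%E].

(* Main.v *)
Require Import Defs.
From mathcomp Require Import all_boot all_order all_algebra.
From mathcomp Require Import all_classical all_reals all_analysis.
From mathcomp Require Import ring lra.

Module Helpers.
Set Implicit Arguments. Unset Strict Implicit. Unset Printing Implicit Defensive.
Import Order.TTheory GRing.Theory Num.Theory.
Import numFieldNormedType.Exports.
Local Open Scope classical_set_scope.
Local Open Scope ring_scope.


Section Aux.
Variable R : realType.

Lemma contract_cont : continuous (@contract R).
Proof.
move=> x; apply/cvgrPdist_lt => e e0.
apply: filterS (@nbhsx_ballx _ (\bar R) x e e0) => y.
by rewrite /ball /= /ereal_ball.
Qed.

Lemma ce_clamp (r : R) : contract (expand r) = Num.max (-1) (Num.min 1 r).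
Proof.
have [r1|r1] := lerP 1 r.
  rewrite expand1 //= max_r //; lra.
have [rm1|rm1] := lerP r (-1).
  rewrite expandN1 //= max_l //.
rewrite expandK ?inE // ler_norml; apply/andP; split; apply: ltW => //.
Qed.

Lemma expand_cont : continuous (@expand R).
Proof.
move=> r; apply/cvg_ballP => e e0.
apply: filterS (@nbhsx_ballx _ R r e e0) => s.
rewrite /ball /= /ereal_ball !ce_clamp; apply: le_lt_trans.
have h1 := ler_norm (r - s); have h2 := ler_norm (s - r); rewrite distrC in h2.
rewrite ler_norml.
repeat match goal with |- context[Num.min ?a ?b] => case: (lerP a b) => ?
  | |- context[Num.max ?a ?b] => case: (lerP a b) => ? end.
all: apply/andP; split; lra.
Qed.

Lemma sandwich (lo hi : nat -> R) : (forall k, lo k <= lo k.+1) ->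
  (forall k, hi k.+1 <= hi k) -> (forall k, lo k <= hi k) ->
  exists L, forall k, lo k <= L <= hi k.
Proof.
move=> hlo hhi hlh.
have mlo j m : lo j <= lo (j + m)%N.
  elim: m => [|m IH]; first by rewrite addn0.
  by apply: (le_trans IH); rewrite addnS.
have mhi j m : hi (j + m)%N <= hi j.
  elim: m => [|m IH]; first by rewrite addn0.
  by apply: le_trans IH; rewrite addnS.
have ub j k : lo j <= hi k.
  apply: (le_trans (mlo j k)); apply: le_trans (mhi k j).
  by rewrite addnC.
exists (sup (range lo)) => k; apply/andP; split.
  apply: sup_upper_bound; last by exists k.
  split; first by exists (lo 0%N), 0%N.
  by exists (hi 0%N) => _ [j _ <-].
apply: ge_sup; first by exists (lo 0%N), 0%N.
by move=> _ [j _ <-].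
Qed.
End Aux.



Definition ee (R : realType) (k : nat) : R := (2^-1) ^+ k.

Section Aux.
Variable R : realType.

Lemma ee_gt0 k : 0 < ee R k.
Proof. by rewrite /ee exprn_gt0 // invr_gt0. Qed.

Lemma eeS k : ee R k.+1 = ee R k / 2.
Proof. by rewrite /ee exprSr. Qed.

Lemma smallpow (eps : R) : 0 < eps -> exists k, ee R k < eps.
Proof.
move=> e0; exists (Num.bound (eps^-1)).
set k := Num.bound _.
have h1 : eps^-1 < k%:R by apply: archi_boundP; rewrite invr_ge0 ltW.
have h2 : (k < 2 ^ k)%N by apply: ltn_expl.
have h3 : k%:R < 2 ^+ k :> R by rewrite -natrX ltr_nat.
have h4 : eps^-1 < 2 ^+ k by apply: lt_trans h3.
rewrite /ee exprVn -(invrK eps) ltf_pV2 ?posrE ?invr_gt0 ?exprn_gt0 //.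
Qed.

Lemma le_of_pow (a b c : R) : (forall k, a <= b + c * ee R k) -> a <= b.
Proof.
move=> H; rewrite leNgt; apply/negP => ab.
have [c0|c0] := lerP c 0.
  have := H 0%N; rewrite /ee expr0 mulr1 => ?. lra.
have hp : 0 < (a - b) / c by rewrite divr_gt0 // subr_gt0.
have [k hk] := smallpow hp.
have := H k; rewrite ltr_pdivlMr // in hk; lra.
Qed.

Lemma approx_cont (X : topologicalType) (S : X -> R) (F : nat -> X -> R) :
  (forall k, continuous (F k)) ->
  (forall eps, 0 < eps -> exists k, forall x, `|S x - F k x| < eps) ->
  continuous S.
Proof.
move=> Fc H x; apply/cvgrPdist_lt => e e0.
have e30 : 0 < e / 3 by rewrite divr_gt0.
have [k hk] := H _ e30.
near=> y.
have hy : `|F k x - F k y| < e / 3.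
  by near: y; move: (Fc k x) => /cvgr_dist_lt; apply.
have t1 := hk x; have t2 := hk y.
have : `|S x - S y| <= `|S x - F k x| + `|F k x - F k y| + `|F k y - S y|.
  apply: le_trans (lerD (ler_normD _ _) (lexx _)).
  apply: le_trans (ler_normD _ _); rewrite le_eqVlt; apply/orP; left; apply/eqP; congr `|_|; ring.
rewrite distrC in t2.
lra.
Unshelve. all: by end_near.
Qed.
End Aux.



Section Aux2.
Variable R : realType.
Variable X : topologicalType.

Lemma series_fun (w : nat -> X -> R) :
  (forall n, continuous (w n)) -> (forall n x, 0 <= w n x <= ee R n.+1) ->
  exists P : X -> R, continuous P /\ (forall x, (forall n, w n x = 0) -> P x = 0)
    /\ (forall n x, w n x <= P x).
Proof.
move=> wc hw.
pose p N x := \sum_(i < N) w i x.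
have pS N x : p N.+1 x = p N x + w N x by rewrite /p big_ord_recr.
have p0 N x : 0 <= p N x by apply: sumr_ge0 => i _; case/andP: (hw i x).
have pc N : continuous (p N).
  elim: N => [|N IH].
    have -> : p 0%N = fun=> 0 by apply: funext => x; rewrite /p big_ord0.
    exact: cst_continuous.
  have -> : p N.+1 = fun x => p N x + w N x by apply: funext => x; exact: pS.
  by move=> x; exact: (continuousD (IH x) (wc N x)).
have ex x : exists L, forall k, p k x <= L <= p k x + ee R k.
  apply: sandwich => k.
  - by rewrite pS lerDl; case/andP: (hw k x).
  - rewrite pS; have := hw k x; rewrite !eeS; lra.
  - by rewrite lerDl ltW // ee_gt0.
have [P HP] := choice ex.
exists P; split.
  apply: approx_cont pc _ => eps e0.
  have [k hk] := smallpow e0; exists k => x.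
  have := HP x k; have := ee_gt0 R k => *.
  apply: le_lt_trans hk; rewrite ler_norml; apply/andP; split; lra.
split.
  move=> x hx.
  have pz k : p k x = 0 by rewrite /p big1 // => i _; exact: hx.
  apply/eqP; rewrite eq_le; apply/andP; split.
    apply: (@le_of_pow _ _ 0 1) => k; have := HP x k; rewrite pz mul1r add0r.
    by case/andP.
  by have := HP x 0%N; rewrite pz; case/andP.
move=> n x; apply: le_trans (_ : p n.+1 x <= _).
  by rewrite pS lerDr.
by case/andP: (HP x n.+1).
Qed.
End Aux2.



Definition isInf (R : realType) (X : topologicalType) (l : X -> R) :=
  exists a : nat -> X -> R, (forall n, continuous (a n)) /\
    forall x, (forall n, l x <= a n x) /\ (forall t, l x < t -> exists n, a n x < t).
Definition isSup (R : realType) (X : topologicalType) (u : X -> R) :=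
  exists b : nat -> X -> R, (forall n, continuous (b n)) /\
    forall x, (forall n, b n x <= u x) /\ (forall t, t < u x -> exists n, t < b n x).

Section Aux3.
Variable R : realType.
Variable X : topologicalType.

Definition phi (z : R) := Num.min 1 (Num.max 0 z).

Lemma phi01 z : 0 <= phi z <= 1.
Proof.
rewrite /phi; case: (lerP 0 z) => ?; case: (lerP 1 _) => ?.
all: apply/andP; split; lra.
Qed.

Lemma phi0 z : z <= 0 -> phi z = 0.
Proof. by move=> z0; rewrite /phi max_l // min_r. Qed.

Lemma phipos z : 0 < z -> 0 < phi z.
Proof.
move=> z0; rewrite /phi max_r ?ltW //.
by case: (lerP 1 z) => _ //.
Qed.

Lemma phic (f : X -> R) : continuous f -> continuous (fun x => phi (f x)).
Proof.
move=> fc x; rewrite /phi.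
apply: (@continuous_min _ _ (fun=> 1) (fun x => Num.max 0 (f x))).
  exact: cst_continuous.
apply: (@continuous_max _ _ (fun=> 0) f); last exact: fc.
exact: cst_continuous.
Qed.

Lemma sep (l u : X -> R) (s t : R) : isInf l -> isSup u -> (forall x, l x <= u x) -> s < t ->
  exists sg : X -> R, continuous sg /\ forall x, 0 <= sg x <= 1 /\
     (t <= l x -> sg x = 1) /\ (u x <= s -> sg x = 0).
Proof.
case=> a [ac ha]; case=> b [bc hb] lu st.
pose w n x := ee R n.+1 * phi (t - a n x).
pose v n x := ee R n.+1 * phi (b n x - s).
have wc n : continuous (w n).
  move=> x; apply: (@continuousM _ _ (fun=> ee R n.+1) (fun x => phi (t - a n x))).
    exact: cst_continuous.
  apply: phic => y; apply: (@continuousB _ _ _ (fun=> t) (a n)); last exact: ac.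
  exact: cst_continuous.
have vc n : continuous (v n).
  move=> x; apply: (@continuousM _ _ (fun=> ee R n.+1) (fun x => phi (b n x - s))).
    exact: cst_continuous.
  apply: phic => y; apply: (@continuousB _ _ _ (b n) (fun=> s)); first exact: bc.
  exact: cst_continuous.
have bnd z n : 0 <= ee R n.+1 * phi z <= ee R n.+1.
  have := phi01 z; have := ee_gt0 R n.+1 => e0 /andP[p0 p1].
  by rewrite mulr_ge0 ?(ltW e0) //=; exact: ler_piMr (ltW e0) p1.
have [P [Pc [P0 Pw]]] := series_fun wc (fun n x => bnd _ n).
have [Q [Qc [Q0 Qv]]] := series_fun vc (fun n x => bnd _ n).
have Pge0 x : 0 <= P x by apply: le_trans (Pw 0%N x); case/andP: (bnd (t - a 0%N x) 0%N).
have Qge0 x : 0 <= Q x by apply: le_trans (Qv 0%N x); case/andP: (bnd (b 0%N x - s) 0%N).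
have pos x : 0 < P x + Q x.
  case: (ltP (l x) t) => hl.
    have [n hn] := (ha x).2 t hl.
    have : 0 < w n x by rewrite /w mulr_gt0 ?ee_gt0 // phipos // subr_gt0.
    have := Pw n x; have := Qge0 x; lra.
  have hs : s < u x by apply: (lt_le_trans st); apply: le_trans hl (lu x).
  have [n hn] := (hb x).2 s hs.
  have : 0 < v n x by rewrite /v mulr_gt0 ?ee_gt0 // phipos // subr_gt0.
  have := Qv n x; have := Pge0 x; lra.
exists (fun x => Q x / (P x + Q x)); split.
  move=> x; apply: (@continuousM _ _ Q (fun x => (P x + Q x)^-1)); first exact: Qc.
  apply: continuousV; first by rewrite gt_eqF // pos.
  exact: (continuousD (Pc x) (Qc x)).
move=> x; split.
  by rewrite divr_ge0 ?Qge0 ?(ltW (pos x)) //= ler_pdivrMr ?pos // mul1r lerDr Pge0.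
split.
  move=> hl; have Pz : P x = 0.
    by apply: P0 => n; rewrite /w phi0 ?mulr0 //; have := (ha x).1 n; lra.
  by have := pos x; rewrite Pz add0r => qp; rewrite divff // gt_eqF.
move=> hu; rewrite Q0 ?mul0r // => n.
by rewrite /v phi0 ?mulr0 //; have := (hb x).1 n; lra.
Qed.
End Aux3.



Section Aux4.
Variable R : realType.
Variable X : topologicalType.

Lemma cont_sum (F : nat -> X -> R) K : (forall j, continuous (F j)) ->
  continuous (fun x => \sum_(j < K) F j x).
Proof.
move=> Fc; elim: K => [|K IH].
  have -> : (fun x => \sum_(j < 0) F j x) = fun=> 0 by apply: funext => x; rewrite big_ord0.
  exact: cst_continuous.
have -> : (fun x => \sum_(j < K.+1) F j x) = fun x => \sum_(j < K) F j x + F K x.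
  by apply: funext => x; rewrite big_ord_recr.
by move=> x; exact: (continuousD (IH x) (Fc K x)).
Qed.

Lemma clamp_step (D d z : R) : 0 <= D -> 0 <= d ->
  Num.min D (Num.max 0 z) + Num.min d (Num.max 0 (z - D)) = Num.min (D + d) (Num.max 0 z).
Proof.
move=> D0 d0.
case: (lerP 0 z) => ?; case: (lerP 0 (z - D)) => ?.
all: repeat match goal with |- context[Num.min ?a ?b] => case: (lerP a b) => ? end.
all: lra.
Qed.

Lemma clamp_tele (d z : R) K : 0 <= d ->
  \sum_(j < K) Num.min d (Num.max 0 (z - j%:R * d)) = Num.min (K%:R * d) (Num.max 0 z).
Proof.
move=> d0; elim: K => [|K IH].
  by rewrite big_ord0 mul0r min_l // le_max lexx.
rewrite big_ord_recr /= IH clamp_step ?mulr_ge0 //.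
by rewrite -natr1 mulrDl mul1r.
Qed.

Lemma approx (l u : X -> R) : isInf l -> isSup u -> (forall x, -1 <= l x) ->
  (forall x, l x <= u x) -> (forall x, u x <= 1) ->
  forall eps, 0 < eps -> exists f : X -> R, continuous f /\
    forall x, l x - eps <= f x <= u x + eps.
Proof.
move=> il iu lb lu ub eps e0.
pose K := Num.bound (2 / eps).
have hK : 2 < K%:R * eps.
  have : 2 / eps < K%:R by apply: archi_boundP; rewrite divr_ge0 // ltW.
  by rewrite ltr_pdivrMr.
have ex (j : nat) : exists sg : X -> R, continuous sg /\ forall x, 0 <= sg x <= 1 /\
     (-1 + j%:R * eps + eps <= l x -> sg x = 1) /\ (u x <= -1 + j%:R * eps -> sg x = 0).
  by apply: sep => //; lra.
have [sg Hsg] := choice ex.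
exists (fun x => -1 + \sum_(j < K) eps * sg j x); split.
  have hc : continuous (fun x => \sum_(j < K) eps * sg j x).
    apply: (@cont_sum (fun j x => eps * sg j x)) => j y.
    exact: (continuousM (@cst_continuous _ _ eps y) ((Hsg j).1 y)).
  move=> x; exact: (continuousD (@cst_continuous _ _ (-1 : R) x) (hc x)).
move=> x; apply/andP; split.
  have : \sum_(j < K) Num.min eps (Num.max 0 ((l x + 1 - eps) - j%:R * eps))
       <= \sum_(j < K) eps * sg j x.
    apply: ler_sum => j _.
    have [s01 [s1 s0]] := (Hsg j).2 x.
    case: (lerP (-1 + j%:R * eps + eps) (l x)) => hl.
      by rewrite s1 // mulr1 ge_min lexx.
    rewrite (@max_l _ _ 0); last lra.
    have : 0 <= sg j x by case/andP: s01.
    rewrite min_r ?(ltW e0) // => h; exact: mulr_ge0 (ltW e0) h.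
  rewrite (@clamp_tele eps (l x + 1 - eps) K) ?(ltW e0) //.
  move: (lu x) (ub x) (lb x) => h1 h2 h3 hs.
  have : l x + 1 - eps <= Num.min (K%:R * eps) (Num.max 0 (l x + 1 - eps)).
    rewrite le_min le_max lexx orbT andbT; lra.
  lra.
have : \sum_(j < K) eps * sg j x <=
       \sum_(j < K) Num.min eps (Num.max 0 ((u x + 1 + eps) - j%:R * eps)).
  apply: ler_sum => j _.
  have [s01 [s1 s0]] := (Hsg j).2 x.
  case: (lerP (u x) (-1 + j%:R * eps)) => hu.
    rewrite s0 // mulr0 le_min ltW //= le_max lexx //.
  rewrite (@max_r _ _ 0); last lra.
  rewrite min_l; last lra.
  by apply: ler_piMr; [apply: ltW | case/andP: s01].
rewrite (@clamp_tele eps (u x + 1 + eps) K) ?(ltW e0) //.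
move: (lu x) (ub x) (lb x) => h1 h2 h3 hs.
have : Num.min (K%:R * eps) (Num.max 0 (u x + 1 + eps)) <= u x + 1 + eps.
  rewrite ge_min max_r ?lexx ?orbT //; lra.
lra.
Qed.
End Aux4.



Fixpoint seqrec (A : Type) (a0 : A) (S : nat -> A -> A) (n : nat) : A :=
  match n with 0%N => a0 | n'.+1 => S n' (seqrec a0 S n') end.

Section Aux5.
Variable R : realType.
Variable X : topologicalType.

Lemma isInf_max (l c : X -> R) : isInf l -> continuous c ->
  isInf (fun x => Num.max (l x) (c x)).
Proof.
case=> a [ac ha] cc; exists (fun n x => Num.max (a n x) (c x)); split.
  move=> n x; exact: (@continuous_max _ _ (a n) c x (ac n x) (cc x)).
move=> x; split.
  by move=> n; rewrite ge_max !le_max lexx orbT ((ha x).1 n).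
move=> t; rewrite gt_max => /andP[h1 h2].
have [n hn] := (ha x).2 t h1; exists n; by rewrite gt_max hn h2.
Qed.

Lemma isSup_min (u c : X -> R) : isSup u -> continuous c ->
  isSup (fun x => Num.min (u x) (c x)).
Proof.
case=> b [bc hb] cc; exists (fun n x => Num.min (b n x) (c x)); split.
  move=> n x; exact: (@continuous_min _ _ (b n) c x (bc n x) (cc x)).
move=> x; split.
  by move=> n; rewrite le_min !ge_min lexx orbT ((hb x).1 n).
move=> t; rewrite lt_min => /andP[h1 h2].
have [n hn] := (hb x).2 t h1; exists n; by rewrite lt_min hn h2.
Qed.

Lemma insert (l u : X -> R) : isInf l -> isSup u -> (forall x, -1 <= l x) ->
  (forall x, l x <= u x) -> (forall x, u x <= 1) ->
  exists f : X -> R, continuous f /\ forall x, l x <= f x <= u x.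
Proof.
move=> il iu lb lu ub.
pose P k (f : X -> R) := continuous f /\ forall x, l x - ee R k <= f x <= u x + ee R k.
have step k f : exists f', P k f -> P k.+1 f' /\ forall x, `|f' x - f x| <= 2 * ee R k.
  case: (pselect (P k f)) => [[fc hf]|nP]; last by exists f.
  have e0 := ee_gt0 R k.
  have fc1 : continuous (fun x => f x - ee R k).
    by move=> x; exact: (continuousB (fc x) (@cst_continuous _ _ (ee R k) x)).
  have fc2 : continuous (fun x => f x + ee R k).
    by move=> x; exact: (continuousD (fc x) (@cst_continuous _ _ (ee R k) x)).
  have h1 x : l x <= Num.max (l x) (f x - ee R k) by rewrite le_max lexx.
  have h2 x : f x - ee R k <= Num.max (l x) (f x - ee R k) by rewrite le_max lexx orbT.
  have h3 x : Num.min (u x) (f x + ee R k) <= u x by rewrite ge_min lexx.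
  have h4 x : Num.min (u x) (f x + ee R k) <= f x + ee R k by rewrite ge_min lexx orbT.
  have lb' x : -1 <= Num.max (l x) (f x - ee R k) by apply: le_trans (h1 x).
  have ub' x : Num.min (u x) (f x + ee R k) <= 1 by apply: le_trans (h3 x) _.
  have lu' x : Num.max (l x) (f x - ee R k) <= Num.min (u x) (f x + ee R k).
    have := hf x; have := lu x => ??.
    rewrite le_min !ge_max; apply/andP; split; apply/andP; split; lra.
  have [f' [f'c hf']] := approx (isInf_max il fc1) (isSup_min iu fc2) lb' lu' ub' (ee_gt0 R k.+1).
  exists f' => _; split; [split => // x|move=> x].
    have := hf' x; have := h1 x; have := h3 x; lra.
  have := hf' x; have := h2 x; have := h4 x; rewrite eeS ler_norml => *.
  apply/andP; split; lra.
have step2 k : exists Sk : (X -> R) -> (X -> R), forall f, P k f ->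
    P k.+1 (Sk f) /\ forall x, `|Sk f x - f x| <= 2 * ee R k.
  by have [Sk HSk] := choice (step k); exists Sk.
have [S HS] := choice step2.
have [f0 [f0c hf0]] := approx il iu lb lu ub (ee_gt0 R 0).
pose fs := seqrec f0 S.
have Pk k : P k (fs k).
  elim: k => [|k IH]; first by split.
  exact: (HS k (fs k) IH).1.
have dk k x : `|fs k.+1 x - fs k x| <= 2 * ee R k := (HS k (fs k) (Pk k)).2 x.
have ex x : exists L, forall k, fs k x - 4 * ee R k <= L <= fs k x + 4 * ee R k.
  by apply: sandwich => k; have := dk k x; have := ee_gt0 R k; rewrite ?eeS ler_norml => *; lra.
have [L HL] := choice ex.
exists L; split.
  apply: approx_cont (fun k => (Pk k).1) _ => eps e0.
  have e4 : 0 < eps / 4 by rewrite divr_gt0.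
  have [k hk] := smallpow e4; exists k => x.
  have := HL x k => *; rewrite ltr_norml.
  apply/andP; split; lra.
move=> x; apply/andP; split.
  apply: (@le_of_pow _ _ _ 5) => k; have := (Pk k).2 x; have := HL x k; lra.
apply: (@le_of_pow _ _ _ 5) => k; have := (Pk k).2 x; have := HL x k; lra.
Qed.
End Aux5.



Section Aux6.
Variable R : realType.
Variable X : topologicalType.

Definition pr (n : nat) : nat * nat := odflt (0, 0)%N (unpickle n).
Lemma prK i j : pr (pickle (i, j)) = (i, j).
Proof. by rewrite /pr pickleK. Qed.

Lemma big_j (c d : R) : 0 < d -> exists j : nat, c - j%:R * d < 0.
Proof.
move=> d0; exists (Num.bound `|c / d|).
have h := archi_boundP (normr_ge0 (c / d)).
have h2 : c / d < (Num.bound `|c / d|)%:R by apply: le_lt_trans (ler_norm _) h.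
by rewrite ltr_pdivrMr // in h2; lra.
Qed.

Lemma insertY (alpha F0 l u : X -> R) : continuous alpha -> (forall x, 0 <= alpha x) ->
  continuous F0 -> (forall x, -1 <= F0 x <= 1) -> isInf l -> isSup u ->
  (forall x, -1 <= l x) -> (forall x, l x <= u x) -> (forall x, u x <= 1) ->
  (forall x, alpha x = 0 -> l x <= F0 x <= u x) ->
  exists F : X -> R, continuous F /\ (forall x, alpha x = 0 -> F x = F0 x) /\
    forall x, l x <= F x <= u x.
Proof.
move=> alc al0 F0c F01 [a [ac ha]] [b [bc hb]] lb lu ub hY.
pose l' x := if alpha x == 0 then F0 x else l x.
pose u' x := if alpha x == 0 then F0 x else u x.
have cj (j : nat) : continuous (fun x => j%:R * alpha x).
  move=> x; exact: (continuousM (@cst_continuous _ _ (j%:R : R) x) (alc x)).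
have il' : isInf l'.
  exists (fun n x => Num.max (a (pr n).1 x) (F0 x - (pr n).2%:R * alpha x)); split.
    move=> n x; apply: (@continuous_max _ _ (a (pr n).1) (fun x => F0 x - (pr n).2%:R * alpha x)).
      exact: ac.
    exact: (continuousB (F0c x) (cj _ x)).
  move=> x; rewrite /l'; case: eqP => [a0|an0].
    split.
      by move=> n; rewrite a0 mulr0 subr0 le_max lexx orbT.
    move=> t ht; have [|i hi] := (ha x).2 t; first by have := hY x a0; lra.
    exists (pickle (i, 0%N)); rewrite prK /= a0 mulr0 subr0 gt_max hi ht //.
  split.
    by move=> n; rewrite le_max ((ha x).1 _).
  move=> t ht; have [i hi] := (ha x).2 t ht.
  have ap : 0 < alpha x by rewrite lt_def al0 andbT; apply/eqP.
  have [j hj] := big_j (F0 x - t) ap.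
  exists (pickle (i, j)); rewrite prK /= gt_max hi /=; lra.
have iu' : isSup u'.
  exists (fun n x => Num.min (b (pr n).1 x) (F0 x + (pr n).2%:R * alpha x)); split.
    move=> n x; apply: (@continuous_min _ _ (b (pr n).1) (fun x => F0 x + (pr n).2%:R * alpha x)).
      exact: bc.
    exact: (continuousD (F0c x) (cj _ x)).
  move=> x; rewrite /u'; case: eqP => [a0|an0].
    split.
      by move=> n; rewrite a0 mulr0 addr0 ge_min lexx orbT.
    move=> t ht; have [|i hi] := (hb x).2 t; first by have := hY x a0; lra.
    exists (pickle (i, 0%N)); rewrite prK /= a0 mulr0 addr0 lt_min hi ht //.
  split.
    by move=> n; rewrite ge_min ((hb x).1 _).
  move=> t ht; have [i hi] := (hb x).2 t ht.
  have ap : 0 < alpha x by rewrite lt_def al0 andbT; apply/eqP.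
  have [j hj] := big_j (t - F0 x) ap.
  exists (pickle (i, j)); rewrite prK /= lt_min hi /=; lra.
have lb' x : -1 <= l' x by rewrite /l'; case: eqP => _; [case/andP: (F01 x)|].
have ub' x : u' x <= 1 by rewrite /u'; case: eqP => _; [case/andP: (F01 x)|].
have lu' x : l' x <= u' x by rewrite /l' /u'; case: eqP => _.
have [F [Fc hF]] := insert il' iu' lb' lu' ub'.
exists F; split => //; split.
  move=> x a0; have := hF x; rewrite /l' /u' a0 eqxx => h.
  by apply/eqP; rewrite eq_le; case/andP: h => -> ->.
move=> x; have := hF x; rewrite /l' /u'; case: eqP => // a0.
have := hY x a0; lra.
Qed.
End Aux6.

End Helpers.
Import Helpers.

Import Order.TTheory GRing.Theory Num.Theory.
Import numFieldNormedType.Exports.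
Local Open Scope classical_set_scope.
Local Open Scope ereal_scope.

Theorem proposition2p2 (R : realType) (X : topologicalType) (Y : set X)
  (g h f0 : X -> \bar R) :
  functionally_closed R Y ->
  countable_Hahn_pair g h ->
  continuous f0 ->
  (forall y, Y y -> g y <= f0 y <= h y) ->
  exists f : X -> \bar R, continuous f /\ (forall y, Y y -> f y = f0 y) /\
    (forall x, g x <= f x <= h x).
Proof.
move=> [alpha [alc [al01 hY]]] [gn [hn [gnc [hnc hgh]]]] f0c hf0.
have cc (k : X -> \bar R) : continuous k -> continuous (fun x => contract (k x)).
  move=> kc x; apply: continuous_comp; [exact: kc|exact: contract_cont].
have c1 (y : \bar R) : (-1 <= contract y <= 1)%R by rewrite -ler_norml contract_le1.
have il : isInf (fun x => contract (g x)).
  exists (fun n x => contract (gn n x)); split; first by move=> n; apply: cc.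
  move=> x; case: (hgh x) => gE _ _; split.
    move=> n; rewrite le_contract gE; apply: ereal_inf_lbound; by exists n.
  move=> t ht; case: (ltrP 1 t) => t1.
    exists 0%N; have := c1 (gn 0%N x); lra.
  have tb : (`|t| <= 1)%R by rewrite ler_norml; have := c1 (g x) => ?; apply/andP; split; lra.
  have : g x < expand t by rewrite -lt_contract expandK.
  rewrite gE => /ereal_inf_lt [_ [n _ <-] hn'].
  by exists n; rewrite -(expandK tb) lt_contract.
have iu : isSup (fun x => contract (h x)).
  exists (fun n x => contract (hn n x)); split; first by move=> n; apply: cc.
  move=> x; case: (hgh x) => _ hE _; split.
    move=> n; rewrite le_contract hE; apply: ereal_sup_ubound; by exists n.
  move=> t ht; case: (ltrP t (-1)) => t1.
    exists 0%N; have := c1 (hn 0%N x); lra.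
  have tb : (`|t| <= 1)%R by rewrite ler_norml; have := c1 (h x) => ?; apply/andP; split; lra.
  have : expand t < h x by rewrite -lt_contract expandK.
  rewrite hE => /ereal_sup_gt [_ [n _ <-] hn'].
  by exists n; rewrite -(expandK tb) lt_contract.
have al0 x : (0 <= alpha x)%R by case/andP: (al01 x).
have hY' x : alpha x = 0%R ->
   (contract (g x) <= contract (f0 x) <= contract (h x))%R.
  move=> a0; have : Y x by rewrite hY /preimage /= a0.
  by move/hf0; rewrite !le_contract.
have lu x : (contract (g x) <= contract (h x))%R.
  by case: (hgh x) => _ _ gh; rewrite le_contract.
have lb x : (-1 <= contract (g x))%R by case/andP: (c1 (g x)).
have ub x : (contract (h x) <= 1)%R by case/andP: (c1 (h x)).
have [F [Fc [FY Fb]]] := insertY alc al0 (cc _ f0c) (fun x => c1 (f0 x)) il iu lb lu ub hY'.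
exists (fun x => expand (F x)); split.
  move=> x; apply: continuous_comp; [exact: Fc|exact: expand_cont].
split.
  move=> y Yy; rewrite FY ?contractK //.
  by move: Yy; rewrite hY /preimage /=.
move=> x; have /andP[h1 h2] := Fb x.
rewrite -[g x]contractK -[h x]contractK.
by rewrite !le_expand.
Qed.
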